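(* Let $p$ be a prime and $q$ a power of $p$. Let $s,b$ be integers with $1\le s\le b<q$, let $L=\{b-s+1,b-s+2,\ldots,b\}$, and assume $p\nmid\binom{b}{s}$. If $\mathcal{F}\subseteq 2^{[n]}$ is $q$-modular $L$-differencing Sperner, then $$|\mathcal{F}|\le\sum_{i=0}^{s}\binom{n-1}{i}.$$
   Context: $[n]=\{1,\ldots,n\}$ and $2^{[n]}$ is the family of all subsets of $[n]$. For a positive integer $m$ and $L\subseteq\mathbb{Z}$, write $r\in L\pmod m$ if $r\equiv \ell\pmod m$ for some $\ell\in L$. For $L\subseteq[q-1]$, a family $\mathcal{F}\subseteq 2^{[n]}$ is $q$-modular $L$-differencing Sperner if $|A\setminus B|\in L\pmod q$ for all distinct $A,B\in\mathcal{F}$. *)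

(* Defs.v *)
From mathcomp Require Import all_boot.
Set Implicit Arguments. Unset Strict Implicit. Unset Printing Implicit Defensive.

Definition in_mod (m : nat) (L : seq nat) (r : nat) : Prop :=
  exists2 l, l \in L & r = l %[mod m].

Definition modular_L_diff_sperner (n q : nat) (L : seq nat)
  (F : {set {set 'I_n}}) : Prop :=
  forall A B, A \in F -> B \in F -> A != B -> in_mod q L #|A :\: B|.

(* Main.v *)
Require Import Defs.
From mathcomp Require Import all_boot all_algebra zify.
Set Implicit Arguments. Unset Strict Implicit. Unset Printing Implicit Defensive.
Import GRing.Theory.


Lemma sub_card_sum (T : finType) (K : {set T}) s (f : nat -> nat) :
  \sum_(X : {set T} | (X \subset K) && (#|X| <= s)) f #|X| =
  \sum_(i < s.+1) 'C(#|K|, i) * f i.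
Proof.
rewrite (partition_big (fun X : {set T} => inord #|X| : 'I_s.+1) predT) //=.
apply: eq_bigr => i _.
rewrite (eq_bigr (fun _ => f i)); last first.
  by move=> X /andP[/andP[_ Hs] /eqP <-]; rewrite inordK.
rewrite sum_nat_const mulnC -cards_draws mulnC; congr (_ * _).
apply: eq_card => X; rewrite inE unfold_in /=.
case: (X \subset K) => //=.
case Hs: (#|X| <= s) => /=.
  apply/eqP/eqP.
  - by move=> <-; rewrite inordK.
  - by move=> H; apply: val_inj; rewrite /= inordK // H.
apply/esym/eqP => H; move: Hs; rewrite H -ltnS ltn_ord; done.
Qed.

Section R_S1.
Local Open Scope ring_scope.
Variable R : pzRingType.
Lemma sub_card_sumR (T : finType) (K : {set T}) s (f : nat -> R) :
  \sum_(X : {set T} | (X \subset K) && (#|X| <= s)%N) f #|X| =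
  \sum_(i < s.+1) f i *+ 'C(#|K|, i).
Proof.
rewrite (partition_big (fun X : {set T} => inord #|X| : 'I_s.+1) predT) //=.
apply: eq_bigr => i _.
rewrite (eq_bigr (fun _ => f i)); last first.
  by move=> X /andP[/andP[_ Hs] /eqP <-]; rewrite inordK.
rewrite sumr_const -cards_draws; congr (_ *+ _).
apply: eq_card => X; rewrite inE unfold_in /=.
case: (X \subset K) => //=.
case Hs: (#|X| <= s)%N => /=.
  apply/eqP/eqP.
  - by move=> <-; rewrite inordK.
  - by move=> H; apply: val_inj; rewrite /= inordK // H.
apply/esym/eqP => H; move: Hs; rewrite H -ltnS ltn_ord; done.
Qed.
End R_S1.

Lemma binom_shift (T : finType) (K : {set T}) c s :
  'C(c + #|K|, s) = \sum_(X : {set T} | (X \subset K) && (#|X| <= s)) 'C(c, s - #|X|).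
Proof.
rewrite (sub_card_sum K s (fun i => 'C(c, s - i))) addnC -binomial.Vandermonde //.
Qed.

Lemma dvd_bin_pexp p k i : prime p -> 0 < i < p ^ k -> p %| 'C(p ^ k, i).
Proof.
move=> pp /andP[i0 ik].
have H := mul_bin_diag (p ^ k) i.-1.
rewrite prednK // in H.
apply/negPn/negP => nd.
have cop : coprime (p ^ k) 'C(p ^ k, i) by apply: coprimeXl; rewrite prime_coprime.
have : p ^ k %| i * 'C(p ^ k, i) by rewrite -H dvdn_mulr.
rewrite Gauss_dvdl // => /dvdn_leq => /(_ i0).
by rewrite leqNgt ik.
Qed.

Section R_S2.
Local Open Scope ring_scope.

Lemma mobius (R : pzRingType) (T : finType) (T0 B : {set T}) :
  ((T0 \subset ~: B)%:R : R) =
  \sum_(U : {set T} | U \subset T0) (-1) ^+ #|U| * (U \subset B)%:R.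
Proof.
transitivity (\sum_(U : {set T} | (U \subset T0 :&: B) && (#|U| <= #|T0 :&: B|)%N) ((-1) ^+ #|U| : R)).
  rewrite sub_card_sumR.
  have -> : \sum_(i < #|T0 :&: B|.+1) ((-1) ^+ i : R) *+ 'C(#|T0 :&: B|, i) =
          (1 + -1) ^+ #|T0 :&: B|.
    by rewrite exprDn_comm; [apply: eq_bigr => i _; rewrite expr1n mul1r | by rewrite /GRing.comm mulr1 mul1r].
  rewrite subrr expr0n cards_eq0 setI_eq0 disjoints_subset //.
rewrite [RHS]big_mkcond [LHS]big_mkcond /=; apply: eq_bigr => U _.
case H: (U \subset T0 :&: B).
  rewrite subset_leq_card //=; move: H; rewrite subsetI => /andP[-> ->].
  by rewrite mulr1.
move: H; rewrite subsetI; case: (U \subset T0) => //= ->.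
by rewrite mulr0.
Qed.
End R_S2.
Local Open Scope ring_scope.

Lemma bin_period p k a t s : prime p -> (s < p ^ k)%N ->
  ('C(a + p ^ k * t, s)%:R : 'F_p) = 'C(a, s)%:R.
Proof.
move=> pp sq; elim: t => [|t IH]; first by rewrite muln0 addn0.
rewrite mulnS addnCA -binomial.Vandermonde natr_sum big_ord_recl.
rewrite bin0 mul1n subn0 IH big1 ?addr0 // => j _.
rewrite natrM; apply/eqP; rewrite mulf_eq0; apply/orP; left.
rewrite -(dvdn_pcharf (pchar_Fp pp)); apply: dvd_bin_pexp => //.
by rewrite /= /bump leq0n add1n /=; exact: leq_ltn_trans (ltn_ord j) sq.
Qed.
Local Open Scope ring_scope.

Lemma G_diag p k s b n : prime p -> (s <= b)%N -> (b < p ^ k)%N -> ~~ (p %| 'C(b, s))%N ->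
  ('C(b + p ^ k * n, s)%:R : 'F_p) != 0.
Proof.
move=> pp sb bq nd; rewrite bin_period //; last exact: leq_ltn_trans sb bq.
by rewrite -(dvdn_pcharf (pchar_Fp pp)).
Qed.

Lemma G_zero p k s b n r : prime p -> (1 <= s)%N -> (s <= b)%N -> (b < p ^ k)%N ->
  (r <= n)%N -> in_mod (p ^ k) (iota (b - s + 1) s) r ->
  ('C(b + p ^ k * n - r, s)%:R : 'F_p) = 0.
Proof.
move=> pp s1 sb bq rn [l]; rewrite mem_iota => /andP[l1 l2] rl.
have lq : (l < p ^ k)%N by lia.
have q0 : (0 < p ^ k)%N by lia.
move: rl; rewrite /= (modn_small lq) => rl.
have Hr := divn_eq r (p ^ k); rewrite rl in Hr.
set d := (r %/ p ^ k)%N in Hr.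
have dn : (d <= n)%N.
  have : (d * p ^ k <= n * p ^ k)%N.
    apply: leq_trans (_ : r <= _)%N; first by rewrite Hr leq_addr.
    by apply: leq_trans rn _; rewrite leq_pmulr.
  by rewrite leq_pmul2r.
have -> : (b + p ^ k * n - r = (b - l) + p ^ k * (n - d))%N.
  rewrite Hr mulnBr; have : (p ^ k * d <= p ^ k * n)%N by rewrite leq_pmul2l.
  nia.
rewrite bin_period //; last exact: leq_ltn_trans sb bq.
by rewrite bin_small //; lia.
Qed.

Local Close Scope ring_scope.
Lemma subC1 (T : finType) (x : T) (A : {set T}) : (A \subset [set~ x]) = (x \notin A).
Proof. by rewrite -disjoints_subset disjoint_sym disjoints1. Qed.

Definition coef (p s m n : nat) (x0 : 'I_n) (A U : {set 'I_n}) : 'F_p :=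
  if x0 \in A then
    ((-1) ^+ #|U| * \sum_(T : {set 'I_n} | (T \subset ~: A) && (#|T| <= s)%N && (U \subset T))
        ('C(m - #|~: A|, s - #|T|))%:R)%R
  else (((U \subset A) && (#|U| <= s)%N)%:R * ('C(m - #|A|, s - #|U|))%:R)%R.

Definition valn (s m n : nat) (x0 : 'I_n) (A B : {set 'I_n}) : nat :=
  if x0 \in A then 'C(m - #|B :\: A|, s) else 'C(m - #|A :\: B|, s).

Local Open Scope ring_scope.

Lemma coef_supp p s m n (x0 : 'I_n) (A U : {set 'I_n}) :
  ~~ ((U \subset [set~ x0]) && (#|U| <= s)%N) -> coef p s m x0 A U = 0.
Proof.
rewrite subC1 /coef => nU; case: ifP => x0A.
  rewrite big_pred0 ?mulr0 // => T; apply/negP => /andP[/andP[TA Ts] UT].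
  move/negP: nU; apply; apply/andP; split.
    apply/negP => x0U; move/subsetP: TA => /(_ x0 (subsetP UT _ x0U)).
    by rewrite inE x0A.
  exact: leq_trans (subset_leq_card UT) Ts.
case H: ((U \subset A) && (#|U| <= s)%N); last by rewrite mul0r.
move/negP: nU; case; move/andP: H => [UA ->]; rewrite andbT.
by apply/negP => x0U; move: x0A; rewrite (subsetP UA _ x0U).
Qed.

Lemma val_expand p s m n (x0 : 'I_n) (A B : {set 'I_n}) : (n <= m)%N ->
  ((valn s m x0 A B)%:R : 'F_p) =
  \sum_(U : {set 'I_n}) coef p s m x0 A U * (U \subset B)%:R.
Proof.
move=> nm; rewrite /valn /coef; case: ifP => x0A.
- have e : (m - #|B :\: A| = (m - #|~: A|) + #|~: A :\: B|)%N.
    have h1 := cardsID B (~: A).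
    have h2 : #|B :\: A| = #|~: A :&: B| by rewrite setDE setIC.
    have h3 : (#|~: A| <= n)%N by rewrite -[X in (_ <= X)%N]card_ord max_card.
    lia.
  rewrite e binom_shift natr_sum.
  transitivity (\sum_(X : {set 'I_n} | (X \subset ~: A) && (#|X| <= s)%N)
      (('C(m - #|~: A|, s - #|X|))%:R : 'F_p) * (X \subset ~: B)%:R).
    rewrite big_mkcond [RHS]big_mkcond /=; apply: eq_bigr => X _.
    rewrite setDE subsetI.
    case: (X \subset ~: A); case: (X \subset ~: B); case: (#|X| <= s)%N => /=;
      by rewrite ?mulr1n ?mulr0n ?mulr1 ?mulr0.
  under eq_bigr => X _ do rewrite mobius mulr_sumr big_mkcond /=.
  rewrite exchange_big /=; apply: eq_bigr => U _.
  rewrite [in RHS]big_mkcondr [in RHS]mulr_sumr [in RHS]mulr_suml; apply: eq_bigr => X _.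
  case: (U \subset X); last by rewrite mulr0 mul0r.
  by rewrite mulrA [_ * (-1) ^+ _]mulrC -mulrA.
- have e : (m - #|A :\: B| = (m - #|A|) + #|A :&: B|)%N.
    have h1 := cardsID B A.
    have h3 : (#|A| <= n)%N by rewrite -[X in (_ <= X)%N]card_ord max_card.
    lia.
  rewrite e binom_shift natr_sum.
  rewrite big_mkcond [RHS]big_mkcond /=; apply: eq_bigr => X _.
  rewrite subsetI.
  case: (X \subset A); case: (X \subset B); case: (#|X| <= s)%N => /=;
    by rewrite ?mulr1n ?mulr0n ?mul1r ?mul0r ?mulr1 ?mulr0.
Qed.

Local Close Scope ring_scope.
Section RB.
Local Open Scope ring_scope.
Lemma rank_bound p (N d : nat) (Uf : 'I_N -> 'I_d -> 'F_p) (Wf : 'I_d -> 'I_N -> 'F_p) (c : 'F_p) :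
  c != 0%R ->
  (forall i l, (\sum_(j < d) Uf i j * Wf j l)%R = (if i == l then c else 0)%R) ->
  (N <= d)%N.
Proof.
move=> c0 H.
pose U := \matrix_(i < N, j < d) Uf i j.
pose W := \matrix_(j < d, l < N) Wf j l.
have E : U *m W = c%:M.
  apply/matrixP => i l; rewrite !mxE.
  have -> : c *+ (i == l) = if i == l then c else 0 by case: (i == l).
  rewrite -H; apply: eq_bigr => j _; rewrite !mxE //.
have : \rank (U *m W) = N.
  rewrite E mxrank_unit // unitmxE det_scalar unitfE expf_neq0 //.
move=> <-; exact: mulmx_max_rank.
Qed.
End RB.

Theorem mainTheorem1 (p q k s b n : nat) (F : {set {set 'I_n}}) :
  prime p -> q = p ^ k ->
  1 <= s -> s <= b -> b < q ->
  ~~ (p %| 'C(b, s)) ->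
  modular_L_diff_sperner q (iota (b - s + 1) s) F ->
  #|F| <= \sum_(0 <= i < s.+1) 'C(n - 1, i).
Proof.
move=> pp -> s1 sb bq nd HF.
case: n F HF => [|n] F HF.
  rewrite big_ltn // bin0; apply: leq_trans (leq_addr _ _).
  have : F \subset powerset [set: 'I_0] by apply/subsetP => A _; rewrite powersetE subsetT.
  by move/subset_leq_card; rewrite card_powerset cardsT card_ord.
pose x0 : 'I_n.+1 := ord0.
pose m := (b + p ^ k * n.+1)%N.
pose D := [set T : {set 'I_n.+1} | (T \subset [set~ x0]) && (#|T| <= s)].
have cardD : #|D| = \sum_(0 <= i < s.+1) 'C(n.+1 - 1, i).
  rewrite big_mkord subn1 /= -sum1_card.
  rewrite (eq_bigl (fun T : {set 'I_n.+1} => (T \subset [set~ x0]) && (#|T| <= s))); last first.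
    by move=> T; rewrite inE.
  rewrite (sub_card_sum _ _ (fun _ => 1)) cardsC1 card_ord /=.
  by apply: eq_bigr => i _; rewrite muln1.
rewrite -cardD.
have nm : (n.+1 <= m)%N.
  rewrite /m; apply: leq_trans (leq_addl _ _); rewrite leq_pmull // expn_gt0 prime_gt0 //.
apply: (@rank_bound p _ _ (fun i j => coef p s m x0 (enum_val i) (enum_val j))
          (fun j l => ((enum_val j : {set 'I_n.+1}) \subset enum_val l)%:R%R)
          ('C(m, s))%:R%R).
  exact: G_diag.
move=> i l.
rewrite -(big_enum_val (A := mem D) (fun U => coef p s m x0 (enum_val i) U * (U \subset enum_val l)%:R)%R).
rewrite big_mkcond /=.
rewrite (eq_bigr (fun U => coef p s m x0 (enum_val i) U * (U \subset enum_val l)%:R)%R); last first.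
  move=> U _; case: ifP => // UD; rewrite coef_supp ?mul0r //.
  by move: UD; rewrite inE => ->.
rewrite -val_expand //.
set A := enum_val i; set B := enum_val l.
have AF : A \in F := enum_valP i.
have BF : B \in F := enum_valP l.
case: eqP => [eqil|il].
  by rewrite /B -eqil -/A /valn setDv cards0 subn0; case: ifP.
have AB : A != B by apply/eqP => /enum_val_inj.
have cardle (X : {set 'I_n.+1}) : #|X| <= n.+1 by rewrite -[X in _ <= X]card_ord max_card.
rewrite /valn; case: ifP => _.
  apply: G_zero => //; apply: HF => //; by rewrite eq_sym.
by apply: G_zero => //; apply: HF.
Qed.
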